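(* Let $L\le U$ be integers with $U-L+1$ a power of $2$, and let $\mathcal{T}(L,U)$ be the dyadic tree on leaves $L,\ldots,U$. Fix a leaf $i\in[L,U]$, and let $[l_1,u_1],[l_2,u_2],\ldots$ be all intervals $[l,u]$ indexing nodes of $\mathcal{T}(L,U)$ such that $i\in[l,u]$ and the node indexed by $[l,u]$ is a left node, listed in ascending order of $u_k-l_k$. Then for every $k$, $u_k-i\ge 2^{k-1}-1$.
   Context: The dyadic tree $\mathcal{T}(L,U)$ (for $U-L+1$ a power of $2$) is the complete binary tree whose leaves are indexed by the integers $L,L+1,\ldots,U$ in order, and in which, whenever two sibling nodes are indexed by intervals $[l_1,u_1]$ and $[u_1+1,u_2]$, their parent is indexed by $[l_1,u_2]$ (a leaf $m$ is identified with the interval $[m,m]$). A node whose indexing interval precedes its sibling's indexing interval is a left node; its sibling is a right node (the root has no sibling and is neither). *)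

(* Defs.v *)
From Stdlib Require Import ZArith List Sorting.Sorted.
Import ListNotations.
Open Scope Z_scope.

Inductive itree : Type :=
| Leaf (m : Z)
| Node (l u : Z) (t1 t2 : itree).

Definition root_interval (t : itree) : Z * Z :=
  match t with
  | Leaf m => (m, m)
  | Node l u _ _ => (l, u)
  end.

Fixpoint dyadic (L : Z) (n : nat) : itree :=
  match n with
  | O => Leaf L
  | S n' => Node L (L + 2 ^ Z.of_nat n - 1)
                 (dyadic L n') (dyadic (L + 2 ^ Z.of_nat n') n')
  end.

(* T(L,U) for U - L + 1 = 2^n. *)
Definition dyadic_tree (L : Z) (n : nat) : itree := dyadic L n.

(* Intervals indexing the left nodes of a tree: in each internal node, the
   child whose interval precedes its sibling's (the first child) is a left
   node.  The root is not a left node. *)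
Fixpoint left_intervals (t : itree) : list (Z * Z) :=
  match t with
  | Leaf _ => []
  | Node _ _ t1 t2 =>
      root_interval t1 :: left_intervals t1 ++ left_intervals t2
  end.

(* Main.v *)
Require Import Defs.
From Stdlib Require Import ZArith List Sorting.Sorted Lia.
Import ListNotations.
Open Scope Z_scope.

Definition sz (p : Z * Z) := snd p - fst p + 1.

Definition Rr (i : Z) (p q : Z * Z) :=
  fst p <= i <= snd p /\ fst q <= i <= snd q /\
  sz p < sz q /\ snd p + sz p <= snd q /\ 2 * sz p <= sz q.

Lemma tree_inv (n : nat) : forall L,
  (forall q, In q (left_intervals (dyadic L n)) ->
     L <= fst q <= snd q /\ snd q + sz q <= L + 2 ^ Z.of_nat n - 1) /\
  (forall i p q, In p (left_intervals (dyadic L n)) ->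
     In q (left_intervals (dyadic L n)) ->
     fst p <= i <= snd p -> fst q <= i <= snd q ->
     p = q \/ Rr i p q \/ Rr i q p).
Proof.
  induction n as [|n IH]; intro L; cbn [dyadic left_intervals].
  - split; intros; contradiction.
  - destruct (IH L) as [A1 B1]. destruct (IH (L + 2 ^ Z.of_nat n)) as [A2 B2].
    assert (HP : 2 ^ Z.of_nat (S n) = 2 * 2 ^ Z.of_nat n).
    { rewrite Nat2Z.inj_succ, Z.pow_succ_r; lia. }
    assert (Hpos : 0 < 2 ^ Z.of_nat n) by (apply Z.pow_pos_nonneg; lia).
    rewrite HP.
    assert (Hr : root_interval (dyadic L n) = (L, L + 2 ^ Z.of_nat n - 1)).
    { destruct n; cbn [dyadic root_interval]; [simpl; f_equal; lia | reflexivity]. }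
    rewrite Hr. clear IH Hr HP. set (N := 2 ^ Z.of_nat n) in *. clearbody N.
    split.
    + intros q [Hq|Hq]; [subst q; unfold sz; cbn [fst snd]; lia|].
      apply in_app_or in Hq as [Hq|Hq];
        [apply A1 in Hq | apply A2 in Hq]; lia.
    + intros i p q Hp Hq Hip Hiq.
      destruct Hp as [Hp|Hp]; destruct Hq as [Hq|Hq].
      * left; congruence.
      * subst p. apply in_app_or in Hq as [Hq|Hq]; apply A1 in Hq || apply A2 in Hq.
        -- right; right. unfold Rr, sz in *; cbn [fst snd] in *; lia.
        -- exfalso; cbn [fst snd] in *; lia.
      * subst q. apply in_app_or in Hp as [Hp|Hp]; apply A1 in Hp || apply A2 in Hp.
        -- right; left. unfold Rr, sz in *; cbn [fst snd] in *; lia.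
        -- exfalso; cbn [fst snd] in *; lia.
      * apply in_app_or in Hp as [Hp|Hp]; apply in_app_or in Hq as [Hq|Hq].
        -- eauto.
        -- apply A1 in Hp; apply A2 in Hq; exfalso; unfold sz in *; lia.
        -- apply A2 in Hp; apply A1 in Hq; exfalso; unfold sz in *; lia.
        -- eauto.
Qed.

Lemma sorted_R (i : Z) (s : list (Z * Z)) :
  Sorted (fun p q : Z * Z => snd p - fst p <= snd q - fst q) s ->
  NoDup s ->
  (forall p q, In p s -> In q s -> p = q \/ Rr i p q \/ Rr i q p) ->
  Sorted (Rr i) s.
Proof.
  induction 1 as [|a t Hs IHs Hd]; intros Hnd HP; constructor.
  - inversion Hnd; subst. apply IHs; auto.
    intros; apply HP; simpl; auto.
  - destruct Hd as [|b t' Hab]; constructor.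
    inversion Hnd; subst.
    destruct (HP a b) as [E|[E|E]]; simpl; auto.
    + subst; exfalso; simpl in *; tauto.
    + unfold Rr, sz in E; lia.
Qed.

Lemma chain (i : Z) (j : nat) : forall (s : list (Z * Z)) (m : nat) a,
  Sorted (Rr i) (a :: s) ->
  snd a - i >= 2 ^ Z.of_nat m - 1 -> sz a >= 2 ^ Z.of_nat m ->
  (j <= length s)%nat ->
  snd (nth j (a :: s) (0,0)) - i >= 2 ^ Z.of_nat (m + j) - 1.
Proof.
  induction j as [|j IH]; intros s m a Hs H1 H2 Hj.
  - simpl. rewrite Nat.add_0_r. lia.
  - destruct s as [|b t]; simpl in Hj; [lia|].
    change (nth (S j) (a :: b :: t) (0,0)) with (nth j (b :: t) (0,0)).
    inversion Hs as [|? ? Hs' Hd]; subst.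
    inversion Hd as [|? ? Hab]; subst.
    replace (m + S j)%nat with (S m + j)%nat by lia.
    assert (HP : 2 ^ Z.of_nat (S m) = 2 * 2 ^ Z.of_nat m).
    { rewrite Nat2Z.inj_succ, Z.pow_succ_r; lia. }
    apply IH; auto; [| |lia]; unfold Rr in Hab; lia.
Qed.

Theorem lemma3 (L U : Z) (n : nat) (i : Z) (s : list (Z * Z)) :
  U - L + 1 = 2 ^ Z.of_nat n ->
  L <= i <= U ->
  (* s lists, without repetition, exactly the intervals [l,u] indexing left
     nodes of T(L,U) with i in [l,u] ... *)
  NoDup s ->
  (forall p : Z * Z,
      In p s <-> (In p (left_intervals (dyadic_tree L n)) /\ fst p <= i <= snd p)) ->
  (* ... in ascending order of u - l *)
  Sorted (fun p q : Z * Z => snd p - fst p <= snd q - fst q) s ->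
  forall k : nat, (1 <= k <= length s)%nat ->
    snd (nth (k - 1) s (0, 0)) - i >= 2 ^ Z.of_nat (k - 1) - 1.
Proof.
  intros HU Hi Hnd Hs Hsort k Hk.
  destruct (tree_inv n L) as [_ B].
  assert (HR : Sorted (Rr i) s).
  { apply sorted_R; auto.
    intros p q Hp Hq. apply Hs in Hp as [Hp Hp']. apply Hs in Hq as [Hq Hq'].
    apply B; auto. }
  destruct s as [|a t]; simpl in Hk; [lia|].
  assert (Ha : fst a <= i <= snd a) by (apply Hs; simpl; auto).
  replace (k - 1)%nat with (0 + (k - 1))%nat at 2 by lia.
  apply chain; auto; [simpl; lia | unfold sz; simpl; lia | lia].
Qed.
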